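(* For every integer $n\ge2$, \[ \sum_{j=0}^{n}B_j=\mathbb{B}_n^{(2)}(1)+B_n-\mathbb{B}_n^{(2)}-1 . \]
   Context: $B_j$ is the $j$th Bernoulli number ($\frac{t}{e^t-1}=\sum_{m\ge0}B_m\frac{t^m}{m!}$). The poly-Bernoulli polynomials are defined by $\sum_{n\ge0}\mathbb{B}_n^{(p)}(x)\frac{t^n}{n!}=\frac{\mathrm{Li}_p(1-e^{-t})}{1-e^{-t}}e^{xt}$ with $\mathrm{Li}_p(z)=\sum_{m\ge1}z^m/m^p$; $\mathbb{B}_n^{(2)}(x)$ is the di-Bernoulli polynomial and $\mathbb{B}_n^{(2)}=\mathbb{B}_n^{(2)}(0)$ the di-Bernoulli number. *)

(* Defs.v *)
From mathcomp Require Import all_boot all_order all_algebra.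
Set Implicit Arguments. Unset Strict Implicit. Unset Printing Implicit Defensive.
Import Order.TTheory GRing.Theory Num.Theory.
Local Open Scope ring_scope.

(* A formal power series sum_n a n t^n with rational coefficients. *)
Definition ps := nat -> rat.

Definition mulps (f g : ps) : ps := fun n => \sum_(k < n.+1) f k * g (n - k)%N.

Definition oneps : ps := fun n => (n == 0)%:R.
Definition tps : ps := fun n => (n == 1)%:R.

Definition powps (f : ps) (k : nat) : ps := iter k (mulps f) oneps.

Definition expps (c : rat) : ps := fun n => c ^+ n / (n`!)%:R.

Definition egf (a : nat -> rat) : ps := fun n => a n / (n`!)%:R.

Definition expm1ps : ps := fun n => expps 1 n - oneps n.

Definition uexp : ps := fun n => oneps n - expps (-1) n.

(* Li_p(1 - e^{-t}) = sum_{m>=1} (1-e^{-t})^m / m^p, as a formal power series.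
   Since (1-e^{-t})^m has no terms of degree < m, the coefficient of t^n only
   receives contributions from 1 <= m <= n. *)
Definition Li_uexp (p : nat) : ps :=
  fun n => \sum_(1 <= m < n.+1) powps uexp m n / (m ^ p)%:R.

(* B is the Bernoulli sequence:  t = (e^t - 1) * sum_m B_m t^m/m!
   (coefficientwise form of  t/(e^t-1) = sum_m B_m t^m/m!). *)
Definition is_bernoulli (B : nat -> rat) : Prop :=
  mulps expm1ps (egf B) = tps.

(* PB x n is the poly-Bernoulli polynomial B_n^(p)(x):
   (1 - e^{-t}) * sum_n PB x n t^n/n! = Li_p(1-e^{-t}) e^{xt}
   (coefficientwise form of the defining generating function, cleared of the
   denominator 1 - e^{-t}). *)
Definition is_poly_bernoulli (p : nat) (PB : rat -> nat -> rat) : Prop :=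
  forall x : rat, mulps uexp (egf (PB x)) = mulps (Li_uexp p) (expps x).

(* Main.v *)
Require Import Defs.
From mathcomp Require Import all_boot all_order all_algebra.
From mathcomp Require Import ring zify.
Import GRing.Theory Num.Theory.
Local Open Scope ring_scope.

Definition tr (K : nat) (f : ps) : {poly rat} := \poly_(i < K.+1) f i.
Definition eqm (k : nat) (p q : {poly rat}) := forall j, (j < k)%N -> p`_j = q`_j.

Lemma coef_tr K f j : (j <= K)%N -> (tr K f)`_j = f j.
Proof. by move=> h; rewrite /tr coef_poly ltnS h. Qed.

Lemma eqm_refl k p : eqm k p p. Proof. by []. Qed.
Lemma eqm_sym k p q : eqm k p q -> eqm k q p. Proof. by move=> h j /h ->. Qed.
Lemma eqm_trans k p q r : eqm k p q -> eqm k q r -> eqm k p r.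
Proof. by move=> h1 h2 j hj; rewrite h1 ?h2. Qed.
Lemma eqm_le k k' p q : (k' <= k)%N -> eqm k p q -> eqm k' p q.
Proof. by move=> hk h j hj; apply: h; apply: leq_trans hj hk. Qed.
Lemma eqmD k p p' q q' : eqm k p p' -> eqm k q q' -> eqm k (p + q) (p' + q').
Proof. by move=> h1 h2 j hj; rewrite !coefD h1 ?h2. Qed.
Lemma eqmN k p p' : eqm k p p' -> eqm k (- p) (- p').
Proof. by move=> h1 j hj; rewrite !coefN h1. Qed.
Lemma eqmB k p p' q q' : eqm k p p' -> eqm k q q' -> eqm k (p - q) (p' - q').
Proof. by move=> h1 h2; apply: eqmD => //; apply: eqmN. Qed.
Lemma eqmM k p p' q q' : eqm k p p' -> eqm k q q' -> eqm k (p * q) (p' * q').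
Proof.
move=> h1 h2 j hj; rewrite !coefM; apply: eq_bigr => i _.
have hi : (i <= j)%N by rewrite -ltnS.
rewrite h1 ?h2 //; [apply: leq_ltn_trans hj; exact: leq_subr | exact: leq_ltn_trans hj].
Qed.
Lemma eqmMl k r p q : eqm k p q -> eqm k (r * p) (r * q).
Proof. by move=> h; apply: eqmM. Qed.
Lemma eqmMr k r p q : eqm k p q -> eqm k (p * r) (q * r).
Proof. by move=> h; apply: eqmM. Qed.
Lemma eqm_deriv k p q : eqm k.+1 p q -> eqm k p^`() q^`().
Proof. by move=> h j hj; rewrite !coef_deriv h. Qed.
Lemma eqm_integ k (p q : {poly rat}) : p`_0 = q`_0 -> eqm k p^`() q^`() -> eqm k.+1 p q.
Proof.
move=> h0 h [|j] hj; first exact: h0.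
have := h j hj; rewrite !coef_deriv => e.
have hn : (j.+1)%:R != 0 :> rat by rewrite pnatr_eq0.
by apply: (mulIf hn); rewrite !mulr_natr.
Qed.
Lemma eqm_shift k p q : eqm k.+1 ('X * p) ('X * q) -> eqm k p q.
Proof. by move=> h j hj; have := h j.+1 hj; rewrite !coefXM. Qed.

Lemma eqm_mul_tr K f g : eqm K.+1 (tr K (mulps f g)) (tr K f * tr K g).
Proof.
move=> j hj; rewrite coef_tr // coefM /mulps; apply: eq_bigr => i _.
have hi : (i <= j)%N by rewrite -ltnS.
rewrite !coef_tr //; [apply: leq_trans (leq_subr _ _) _ | apply: leq_trans hi _]; by rewrite -ltnS.
Qed.
Lemma eqm_sub_tr K f g : eqm K.+1 (tr K (fun n => f n - g n)) (tr K f - tr K g).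
Proof. by move=> j hj; rewrite coefB !coef_tr. Qed.
Lemma tr_one K : eqm K.+1 (tr K oneps) 1.
Proof. by move=> j hj; rewrite coef_tr // coef1. Qed.
Lemma tr_t K : eqm K.+1 (tr K tps) 'X.
Proof. by move=> j hj; rewrite coef_tr // coefX. Qed.
Lemma tr_exp0 K : eqm K.+1 (tr K (expps 0)) 1.
Proof.
move=> j hj; rewrite coef_tr // coef1 /expps expr0n; case: j {hj} => //=.
by move=> j; rewrite mul0r.
Qed.
Lemma natr_fact_neq0 j : (j`!)%:R != 0 :> rat.
Proof. by rewrite pnatr_eq0 -lt0n fact_gt0. Qed.
Lemma binr n k : (k <= n)%N -> ('C(n, k))%:R = (n`!)%:R / ((k`!)%:R * ((n - k)`!)%:R) :> rat.
Proof.
move=> h; rewrite -(bin_fact h) !natrM mulfK //; apply: mulf_neq0; exact: natr_fact_neq0.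
Qed.
Lemma tr_expM K a b : eqm K.+1 (tr K (expps a) * tr K (expps b)) (tr K (expps (a + b))).
Proof.
move=> j hj; rewrite -(eqm_mul_tr K (expps a) (expps b) j hj) !coef_tr // /mulps /expps addrC exprDn.
rewrite mulr_suml; apply: eq_bigr => i _.
have hi : (i <= j)%N by rewrite -ltnS.
rewrite -[_ *+ 'C(j, i)]mulr_natl binr //.
have h1 := natr_fact_neq0 i; have h2 := natr_fact_neq0 (j - i).
have h3 := natr_fact_neq0 j.
field.
by rewrite h1 h2 h3.
Qed.
Lemma tr_exp_deriv K c : eqm K (tr K (expps c))^`() (c%:P * tr K (expps c)).
Proof.
move=> j hj; rewrite coef_deriv coefCM (coef_tr _ _ _ hj) (coef_tr _ _ _ (ltnW hj)) /expps factS natrM exprS.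
have h1 := natr_fact_neq0 j; have h2 : (j.+1)%:R != 0 :> rat by rewrite pnatr_eq0.
rewrite -mulr_natr; field; by rewrite h1 addrC natr1 h2.
Qed.
Lemma pow_low (p : {poly rat}) m j : p`_0 = 0 -> (j < m)%N -> (p ^+ m)`_j = 0.
Proof.
move=> h0; elim: m j => [|m IH] j //= hj.
rewrite exprS coefM big1 // => [[[|i] hi]] _ /=; first by rewrite h0 mul0r.
rewrite IH ?mulr0 //; lia.
Qed.
Lemma tr_pow K f m : eqm K.+1 (tr K (powps f m)) (tr K f ^+ m).
Proof.
elim: m => [|m IH]; first exact: tr_one.
rewrite exprS; apply: eqm_trans (eqm_mul_tr _ _ _) _.
by apply: eqmM.
Qed.
Lemma deriv_pow (p : {poly rat}) m : (p ^+ m.+1)^`() = p ^+ m * p^`() *+ m.+1.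
Proof.
elim: m => [|m IH]; first by rewrite expr1 expr0 mul1r.
by rewrite exprS derivM IH -mulrnAr mulrA -exprS (mulrC p^`()) mulrnAr -mulrS.
Qed.
Section Li.
Variable K : nat.
Let U := tr K uexp.
Let Em := tr K (expps (-1)).

Lemma U0 : U`_0 = 0.
Proof. by rewrite /U coef_tr // /uexp /oneps /expps /= expr0 divr1 subrr. Qed.
Lemma U_Em : eqm K.+1 U (1 - Em).
Proof. by move=> j hj; rewrite /U /Em !coef_tr // coefB coef1 coef_tr. Qed.
Lemma dU : eqm K U^`() (1 - U).
Proof.
apply: eqm_trans (eqm_deriv _ _ _ U_Em) _.
rewrite derivB derivC sub0r.
apply: eqm_trans (eqmN _ _ _ (tr_exp_deriv _ _)) _.
rewrite polyCN polyC1 mulN1r opprK.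
apply: (eqm_le _ _ _ _ (leqnSn _)).
move=> j hj; by rewrite coefB (U_Em j hj) coefB opprB addrC subrK.
Qed.
Definition Q1 := \sum_(m < K) (m.+1%:R^-1) *: U ^+ m.+1.
Lemma Q1_0 : Q1`_0 = 0.
Proof. by rewrite coef_sum big1 // => m _; rewrite coefZ pow_low ?mulr0 // U0. Qed.
Lemma geom n : (1 - U) * \sum_(m < n) U ^+ m = 1 - U ^+ n.
Proof.
elim: n => [|n IH]; first by rewrite big_ord0 mulr0 expr0 subrr.
rewrite big_ord_recr /= mulrDr IH exprS; ring.
Qed.
Lemma dQ1 : Q1^`() = (\sum_(m < K) U ^+ m) * U^`().
Proof.
rewrite /Q1 (big_morph _ (@derivD _) (derivC 0)) mulr_suml; apply: eq_bigr => m _.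
rewrite derivZ deriv_pow -scaler_nat scalerA mulVf ?scale1r //.
by rewrite pnatr_eq0.
Qed.
Lemma Q1X : eqm K.+1 Q1 'X.
Proof.
apply: eqm_integ; first by rewrite Q1_0 coefX.
rewrite dQ1 derivX.
apply: eqm_trans (eqmMl _ _ _ _ dU) _.
rewrite mulrC geom => j hj.
by rewrite coefB pow_low ?subr0 // U0.
Qed.
Definition Q2 := \sum_(m < K) (((m.+1 ^ 2)%N)%:R^-1) *: U ^+ m.+1.
Lemma UdQ2 : U * Q2^`() = Q1 * U^`().
Proof.
rewrite /Q2 /Q1 (big_morph _ (@derivD _) (derivC 0)) mulr_sumr mulr_suml.
apply: eq_bigr => m _; rewrite derivZ deriv_pow.
rewrite -scaler_nat scalerA -scalerAr scalerAl exprS mulrA -!scalerAl; congr (_ *: _).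
have h : m.+1%:R != 0 :> rat by rewrite pnatr_eq0.
rewrite natrX; field; by rewrite addrC natr1.
Qed.
Lemma L2Q2 : eqm K.+1 (tr K (Li_uexp 2)) Q2.
Proof.
move=> j hj; rewrite coef_tr // /Li_uexp coef_sum big_add1 /=.
rewrite -(big_mkord xpredT (fun m => ((m.+1 ^ 2)%N%:R^-1 *: U ^+ m.+1)`_j)).
rewrite (@big_cat_nat _ _ _ j 0 K) //=.
rewrite [X in _ + X]big_nat_cond [X in _ + X]big1 ?addr0; last first.
  move=> i /andP [/andP [h1 h2] _]; rewrite coefZ pow_low ?mulr0 //; try exact: U0; lia.
apply: eq_bigr => m _; rewrite coefZ mulrC.
congr (_ * _); exact: (etrans (esym (coef_tr K (powps uexp m.+1) j hj)) (tr_pow K uexp m.+1 j hj)).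
Qed.
Lemma U_dL2 : eqm K (U * (tr K (Li_uexp 2))^`()) ('X * (1 - U)).
Proof.
apply: eqm_trans (eqmMl _ _ _ _ (eqm_deriv _ _ _ L2Q2)) _.
rewrite UdQ2; apply: eqmM; last exact: dU.
exact: (eqm_le _ _ _ _ (leqnSn _) Q1X).
Qed.
End Li.

Lemma brec B (hB : is_bernoulli B) N : (1 <= N)%N ->
  \sum_(i < N) ('C(N, i))%:R * B i = (N == 1%N)%:R.
Proof.
move=> hN.
have h : mulps (egf B) expm1ps N = (N == 1%N)%:R.
  rewrite -(coef_tr N (mulps (egf B) expm1ps) N (leqnn N)) (eqm_mul_tr N _ _ N (ltnSn N)).
  by rewrite mulrC -(eqm_mul_tr N _ _ N (ltnSn N)) hB coef_tr.
move: h; rewrite /mulps big_ord_recr /= subnn.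
have -> : expm1ps 0 = 0 by rewrite /expm1ps /expps /oneps /= expr0 divr1 subrr.
rewrite mulr0 addr0 => h.
transitivity (N`!%:R * \sum_(i < N) egf B i * expm1ps (N - i)%N).
  rewrite mulr_sumr; apply: eq_bigr => i _.
  have hi : (i <= N)%N by apply: ltnW.
  have hi' : (subn N i == 0%N) = false by apply/negbTE; rewrite subn_eq0 -ltnNge.
  rewrite binr //  /egf /expm1ps /expps /oneps hi' expr1n subr0.
  have h1 := natr_fact_neq0 i; have h2 := natr_fact_neq0 (N - i)%N.
  by field; rewrite h1 h2.
rewrite h; case: eqP => [->|_]; last by rewrite mulr0.
by rewrite mulr1.
Qed.

Lemma binsum (B : nat -> rat)
  (hrec : forall N, (1 <= N)%N -> \sum_(i < N) ('C(N, i))%:R * B i = (N == 1%N)%:R) n :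
  (1 <= n)%N -> \sum_(i < n) ('C(n, i.+1))%:R * B i = \sum_(i < n) B i + (1 < n)%:R.
Proof.
elim: n => [//|n IH] _.
case: n IH => [|n] IH; first by rewrite !big_ord_recr !big_ord0 /= bin1 !add0r addr0 mul1r.
under eq_bigr => i _ do rewrite binS natrD mulrDl.
rewrite big_split /= [X in X + _ = _]big_ord_recr [X in _ + X = _]big_ord_recr /=.
rewrite bin_small // binn mul0r addr0 IH // hrec // [X in _ = X + _]big_ord_recr /=.
have h : ((1 < n.+1)%N + (n.+1 == 1%N))%N = 1%N by case: n {IH}.
rewrite -[in RHS]h natrD; ring.
Qed.

Theorem corollary3 (B : nat -> rat) (DB : rat -> nat -> rat)
  (hB : is_bernoulli B) (hDB : is_poly_bernoulli 2 DB) (n : nat) (hn : (2 <= n)%N) :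
  \sum_(0 <= j < n.+1) B j = DB 1 n + B n - DB 0 n - 1.
Proof.
set K := n.+1.
set U := tr K uexp. set Em := tr K (expps (-1)). set E1 := tr K (expps 1).
set b := tr K (egf B). set L := tr K (Li_uexp 2).
set D0 := tr K (egf (DB 0)). set D1 := tr K (egf (DB 1)).
have hEE : eqm K.+1 (E1 * Em) 1.
  apply: (eqm_trans _ _ _ _ (tr_expM K 1 (-1))); rewrite subrr; exact: tr_exp0.
have hBm : eqm K.+1 ((E1 - 1) * b) 'X.
  have h := eqm_mul_tr K expm1ps (egf B); rewrite hB in h.
  apply: (eqm_trans _ _ _ _ _ (eqm_trans _ _ _ _ (eqm_sym _ _ _ h) (tr_t K))).
  apply: eqmMr => j hj; by rewrite coef_tr // coefB coef1 coef_tr.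
have hUEm := U_Em K.
have hEU : eqm K.+1 (E1 * U) (E1 - 1).
  apply: (eqm_trans _ _ _ _ (eqmMl _ _ _ _ hUEm)).
  rewrite mulrBr mulr1; apply: eqmB => //; exact: hEE.
have hE1U : eqm K.+1 (E1 * (1 - U)) 1.
  apply: (eqm_trans _ _ _ _ _ hEE); apply: eqmMl => j hj.
  by rewrite coefB (hUEm j hj) coefB opprB addrC subrK.
have hdL : eqm n L^`() b.
  have h1 := U_dL2 K.
  have h2 : eqm K ((E1 - 1) * L^`()) 'X.
    apply: (eqm_trans _ _ _ _ (eqmMr _ _ _ _ (eqm_sym _ _ _ (eqm_le _ _ _ _ (leqnSn _) hEU)))).
    rewrite -mulrA; apply: (eqm_trans _ _ _ _ (eqmMl _ _ _ _ h1)).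
    have -> : E1 * ('X * (1 - U)) = 'X * (E1 * (1 - U)) by ring.
    rewrite -[X in eqm _ _ X]mulr1; apply: eqmMl.
    exact: (eqm_le _ _ _ _ (leqnSn _) hE1U).
  apply: eqm_shift.
  apply: (eqm_trans _ _ _ _ (eqmMr _ _ _ _ (eqm_sym _ _ _ (eqm_le _ _ _ _ (leqnSn _) hBm)))).
  have -> : (E1 - 1) * b * L^`() = b * ((E1 - 1) * L^`()) by ring.
  rewrite [X in eqm _ _ X]mulrC; exact: eqmMl.
have hU0 : eqm K.+1 (U * D0) L.
  have h := eqm_mul_tr K uexp (egf (DB 0)); rewrite (hDB 0) in h.
  apply: (eqm_trans _ _ _ _ (eqm_sym _ _ _ h)).
  apply: (eqm_trans _ _ _ _ (eqm_mul_tr _ _ _)).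
  rewrite -[X in eqm _ _ X]mulr1; apply: eqmMl; exact: tr_exp0.
have hU1 : eqm K.+1 (U * D1) (L * E1).
  have h := eqm_mul_tr K uexp (egf (DB 1)); rewrite (hDB 1) in h.
  apply: (eqm_trans _ _ _ _ (eqm_sym _ _ _ h)); exact: eqm_mul_tr.
have e1 : eqm K.+1 (U * (D1 - D0)) (L * (E1 * U)).
  rewrite mulrBr; apply: (eqm_trans _ _ _ _ (eqmB _ _ _ _ _ hU1 hU0)).
  have -> : L * E1 - L = L * (E1 - 1) by ring.
  apply: eqmMl; exact: eqm_sym.
have hD : eqm K (D1 - D0) (L * E1).
  apply: eqm_shift.
  apply: (eqm_trans _ _ _ _ (eqmMr _ _ _ _ (eqm_sym _ _ _ hBm))).
  apply: (eqm_trans _ _ _ _ (eqmMr _ _ _ _ (eqmMr _ _ _ _ (eqm_sym _ _ _ hEU)))).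
  have -> : E1 * U * b * (D1 - D0) = E1 * b * (U * (D1 - D0)) by ring.
  apply: (eqm_trans _ _ _ _ (eqmMl _ _ _ _ e1)).
  have -> : E1 * b * (L * (E1 * U)) = E1 * U * b * (L * E1) by ring.
  apply: (eqm_trans _ _ _ _ (eqmMr _ _ _ _ (eqmMr _ _ _ _ hEU))).
  exact: eqmMr.
have heq := hD n (ltnSn n).
have L0 : L`_0 = 0 by rewrite /L coef_tr // /Li_uexp big_geq.
rewrite coefB /D1 /D0 !coef_tr // /egf coefM big_ord_recl L0 mul0r add0r in heq.
have key : DB 1 n - DB 0 n = \sum_(i < n) ('C(n, i.+1))%:R * B i.
  have hf := natr_fact_neq0 n.
  transitivity (n`!%:R * (DB 1 n / n`!%:R - DB 0 n / n`!%:R)); first by field.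
  rewrite heq mulr_sumr; apply: eq_bigr => i _.
  have hi : (i < n)%N := ltn_ord i.
  have hL := hdL i hi.
  rewrite coef_deriv /b coef_tr /egf in hL; last by apply: leq_trans (ltnW hi) _.
  have -> : nat_of_ord (lift ord0 i) = i.+1 by [].
  have hL' : L`_i.+1 = B i / i`!%:R / i.+1%:R.
    by rewrite -hL -[_ *+ i.+1]mulr_natr mulfK // pnatr_eq0.
  rewrite hL' /E1 coef_tr; last by apply: leq_trans (leq_subr _ _) (leqnSn n).
  rewrite /expps expr1n binr // factS natrM.
  have h1 := natr_fact_neq0 i; have h2 := natr_fact_neq0 (n - i.+1)%N.
  have h3 : i.+1%:R != 0 :> rat by rewrite pnatr_eq0.
  field; by rewrite h1 h2 addrC natr1 h3.
move: key; rewrite (binsum B (brec B hB) n (ltnW hn)) // => key.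
have h1n : (1 < n)%N by [].
rewrite h1n in key.
rewrite big_mkord /K big_ord_recr /=.
have -> : DB 1 n = DB 0 n + (\sum_(i < n) B i + 1) by rewrite -key; ring.
ring.
Qed.
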